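(* The randomized mechanism that always outputs the uniform distribution over $[0,1]$ is an $\mathcal O(\sqrt n)$-approximation for the minimum utility: there is an absolute constant $C$ such that for every $n\ge 2$ and every profile $\mathbf x\in[0,1]^n$, $$\max_{z\in[0,1]}\min_i|x_i-z|\le C\sqrt n\;\mathbb E_{y\sim U[0,1]}\Big[\min_i |x_i-y|\Big].$$
   Context: Agents $i=1,\dots,n$ at locations $x_i\in[0,1]$ receive utility $|x_i-y|$ from an obnoxious facility at $y\in[0,1]$. The minimum-utility objective (the $L_{-\infty}$ social utility) of $y$ is $\min_i|x_i-y|$; a randomized mechanism's value is the expectation of this objective over its output distribution. *)

(* Defs.v *)
From Stdlib Require Import Reals.
From Coquelicot Require Import Coquelicot.
Open Scope R_scope.

Fixpoint minf (f : nat -> R) (m : nat) : R :=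
  match m with
  | O => f O
  | S k => Rmin (minf f k) (f (S k))
  end.

(* Minimum-utility (L_{-oo} social utility) of facility location y for the
   profile x_0, ..., x_{n-1}: min_i |x_i - y|  (meaningful for n >= 1). *)
Definition min_util (n : nat) (x : nat -> R) (y : R) : R :=
  minf (fun i => Rabs (x i - y)) (n - 1)%nat.

(* Expected minimum utility of the uniform mechanism: E_{y ~ U[0,1]} [min_i |x_i - y|]
   = integral over [0,1] of the objective (density 1). *)
Definition uniform_value (n : nat) (x : nat -> R) : R :=
  RInt (fun y => min_util n x y) 0 1.

(* Main.v *)
Require Import Defs.
From Stdlib Require Import Reals Lra Lia.
From Coquelicot Require Import Coquelicot.
Open Scope R_scope.

Lemma cont_min (f g : R -> R) y : continuous f y -> continuous g y ->
  continuous (fun y => Rmin (f y) (g y)) y.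
Proof.
  intros Hf Hg.
  apply (continuous_ext (fun y => (f y + g y - Rabs (f y - g y)) / 2)).
  { intros u. unfold Rmin. destruct (Rle_dec (f u) (g u)).
    - rewrite Rabs_left1; lra.
    - rewrite Rabs_right; lra. }
  apply (continuous_scal_l (fun y => (f y + g y - Rabs (f y - g y))) (/2)).
  apply (continuous_minus (fun y => f y + g y) (fun y => Rabs (f y - g y))).
  - apply (continuous_plus f g); auto.
  - apply continuous_Rabs_comp. apply (continuous_minus f g); auto.
Qed.

Definition h (a t y : R) : R := Rmax 0 (t - Rabs (y - a)).

Lemma h_cont a t y : continuous (h a t) y.
Proof.
  unfold h.
  apply (continuous_ext (fun y => (t - Rabs (y - a) + Rabs (t - Rabs (y - a))) / 2)).
  { intros u. unfold Rmax. destruct (Rle_dec 0 (t - Rabs (u - a))).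
    - rewrite (Rabs_right (t - Rabs (u - a))); lra.
    - rewrite (Rabs_left (t - Rabs (u - a))); lra. }
  apply (continuous_scal_l (fun y => (t - Rabs (y - a) + Rabs (t - Rabs (y - a)))) (/2)).
  assert (H1 : continuous (fun y => t - Rabs (y - a)) y).
  { apply (continuous_minus (fun _ => t) (fun y => Rabs (y - a))).
    apply continuous_const. apply continuous_Rabs_comp.
    apply (continuous_minus (fun y => y) (fun _ => a)).
    apply continuous_id. apply continuous_const. }
  apply (continuous_plus (fun y => t - Rabs (y - a)) (fun y => Rabs (t - Rabs (y - a)))).
  exact H1. apply continuous_Rabs_comp. exact H1.
Qed.

Lemma h_ex a t u v : ex_RInt (h a t) u v.
Proof. apply (ex_RInt_continuous (V:=R_CompleteNormedModule)). intros; apply h_cont. Qed.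

Lemma h_ge0 a t y : 0 <= h a t y.
Proof. unfold h. apply Rmax_l. Qed.

Lemma RInt_lin (c u v : R) :
  RInt (fun y => y - c) u v = ((v - c)^2 - (u - c)^2) / 2.
Proof.
  apply is_RInt_unique.
  replace (((v - c)^2 - (u - c)^2) / 2) with
    (minus ((fun y => (y - c)^2/2) v) ((fun y => (y - c)^2/2) u)).
  2:{ unfold minus, plus, opp; simpl. field. }
  apply (is_RInt_derive (V:=R_CompleteNormedModule) (fun y => (y - c)^2/2) (fun y => y - c)).
  - intros y _. auto_derive; auto. field.
  - intros y _. apply (continuous_minus (fun y => y) (fun _ => c)).
    apply continuous_id. apply continuous_const.
Qed.

Lemma RInt_lin2 (c u v : R) :
  RInt (fun y => c - y) u v = ((u - c)^2 - (v - c)^2) / 2.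
Proof.
  apply is_RInt_unique.
  replace (((u - c)^2 - (v - c)^2) / 2) with
    (minus ((fun y => - (y - c)^2/2) v) ((fun y => - (y - c)^2/2) u)).
  2:{ unfold minus, plus, opp; simpl. field. }
  apply (is_RInt_derive (V:=R_CompleteNormedModule) (fun y => - (y - c)^2/2) (fun y => c - y)).
  - intros y _. auto_derive; auto. field.
  - intros y _. apply (continuous_minus (fun _ => c) (fun y => y)).
    apply continuous_const. apply continuous_id.
Qed.

Lemma h_left a t : 0 <= t -> RInt (h a t) (a - t) a = t^2/2.
Proof.
  intros Ht.
  rewrite (RInt_ext _ (fun y => y - (a - t))).
  - rewrite RInt_lin. simpl. field.
  - intros y. rewrite Rmin_left by lra. rewrite Rmax_right by lra. intros Hy.
    unfold h. rewrite Rabs_left by lra. rewrite Rmax_right; lra.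
Qed.

Lemma h_right a t : 0 <= t -> RInt (h a t) a (a + t) = t^2/2.
Proof.
  intros Ht.
  rewrite (RInt_ext _ (fun y => (a + t) - y)).
  - rewrite RInt_lin2. simpl. field.
  - intros y. rewrite Rmin_left by lra. rewrite Rmax_right by lra. intros Hy.
    unfold h. rewrite Rabs_right by lra. rewrite Rmax_right; lra.
Qed.

Lemma h_zero a t u v : (forall y, Rmin u v < y < Rmax u v -> t <= Rabs (y - a)) ->
  RInt (h a t) u v = 0.
Proof.
  intros H.
  rewrite (RInt_ext _ (fun _ => 0)).
  - rewrite RInt_const. simpl. unfold scal; simpl. unfold mult; simpl. ring.
  - intros y Hy. unfold h. specialize (H y Hy). rewrite Rmax_left; lra.
Qed.

Lemma chasles3 f u v w : ex_RInt f u v -> ex_RInt f v w ->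
  RInt f u w = RInt f u v + RInt f v w.
Proof. intros; rewrite <- (RInt_Chasles f u v w); auto. Qed.

Lemma h_upper a t : 0 <= t -> RInt (h a t) 0 1 <= t^2.
Proof.
  intros Ht.
  set (lo := Rmin 0 (a - t)). set (hi := Rmax 1 (a + t)).
  assert (Hlo1 : lo <= 0) by apply Rmin_l.
  assert (Hlo2 : lo <= a - t) by apply Rmin_r.
  assert (Hhi1 : 1 <= hi) by apply Rmax_l.
  assert (Hhi2 : a + t <= hi) by apply Rmax_r.
  assert (E1 : RInt (h a t) lo hi = RInt (h a t) lo 0 + RInt (h a t) 0 1 + RInt (h a t) 1 hi).
  { rewrite (chasles3 _ lo 0 hi) by apply h_ex. rewrite (chasles3 _ 0 1 hi) by apply h_ex. simpl; ring. }
  assert (E2 : RInt (h a t) lo hi = RInt (h a t) lo (a-t) + RInt (h a t) (a-t) a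
     + RInt (h a t) a (a+t) + RInt (h a t) (a+t) hi).
  { rewrite (chasles3 _ lo (a-t) hi) by apply h_ex.
    rewrite (chasles3 _ (a-t) a hi) by apply h_ex.
    rewrite (chasles3 _ a (a+t) hi) by apply h_ex. simpl; ring. }
  rewrite h_left, h_right in E2 by auto.
  rewrite (h_zero a t lo (a-t)) in E2.
  2:{ intros y. rewrite Rmin_left, Rmax_right by lra. intros Hy. rewrite Rabs_left; lra. }
  rewrite (h_zero a t (a+t) hi) in E2.
  2:{ intros y. rewrite Rmin_left, Rmax_right by lra. intros Hy. rewrite Rabs_right; lra. }
  assert (P1 : 0 <= RInt (h a t) lo 0).
  { apply RInt_ge_0; auto. apply h_ex. intros; apply h_ge0. }
  assert (P2 : 0 <= RInt (h a t) 1 hi).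
  { apply RInt_ge_0; auto. apply h_ex. intros; apply h_ge0. }
  lra.
Qed.
Open Scope R_scope.

Lemma minf_cont (x : nat -> R) m y :
  continuous (fun y => minf (fun i => Rabs (x i - y)) m) y.
Proof.
  induction m as [|m IH]; simpl.
  - apply continuous_Rabs_comp. apply (continuous_minus (fun _ => x 0%nat) (fun y => y)).
    apply continuous_const. apply continuous_id.
  - apply (cont_min (fun y => minf (fun i => Rabs (x i - y)) m) (fun y => Rabs (x (S m) - y))).
    exact IH. apply continuous_Rabs_comp.
    apply (continuous_minus (fun _ => x (S m)) (fun y => y)).
    apply continuous_const. apply continuous_id.
Qed.

Lemma minf_ge0 g m : (forall i, 0 <= g i) -> 0 <= minf g m.
Proof.
  intros H; induction m; simpl; auto. unfold Rmin; destruct (Rle_dec _ _); auto.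
Qed.

Lemma minf_le0 g m : minf g m <= g 0%nat.
Proof.
  induction m; simpl. lra. eapply Rle_trans; [apply Rmin_l|auto].
Qed.

Lemma minf_lip (x : nat -> R) m y z :
  minf (fun i => Rabs (x i - z)) m - Rabs (y - z) <= minf (fun i => Rabs (x i - y)) m.
Proof.
  assert (T : forall i, Rabs (x i - z) - Rabs (y - z) <= Rabs (x i - y)).
  { intros i. pose proof (Rabs_triang (x i - y) (y - z)).
    replace (x i - y + (y - z)) with (x i - z) in H by ring. lra. }
  induction m; simpl. apply T.
  unfold Rmin at 1 2. destruct (Rle_dec _ (Rabs (x (S m) - z))), (Rle_dec _ (Rabs (x (S m) - y))).
  all: try lra; pose proof (T (S m)); lra.
Qed.

Fixpoint S_ (x : nat -> R) (t : R) (m : nat) (y : R) : R :=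
  match m with
  | O => h (x O) t y
  | S k => S_ x t k y + h (x (S k)) t y
  end.

Lemma S_cont x t m y : continuous (S_ x t m) y.
Proof.
  induction m; simpl. apply h_cont.
  apply (continuous_plus (S_ x t m) (h (x (S m)) t)); auto. apply h_cont.
Qed.

Lemma S_ex x t m u v : ex_RInt (S_ x t m) u v.
Proof. apply (ex_RInt_continuous (V:=R_CompleteNormedModule)). intros; apply S_cont. Qed.

Lemma S_ge0 x t m y : 0 <= S_ x t m y.
Proof. induction m; simpl. apply h_ge0. pose proof (h_ge0 (x (S m)) t y); lra. Qed.

Lemma S_int x t m : 0 <= t -> RInt (S_ x t m) 0 1 <= INR (S m) * t^2.
Proof.
  intros Ht. induction m.
  - replace (INR 1 * t^2) with (t^2) by (simpl; ring). apply h_upper; auto.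
  - change (S_ x t (S m)) with (fun y => plus (S_ x t m y) (h (x (S m)) t y)).
    rewrite (RInt_plus (V:=R_CompleteNormedModule) (S_ x t m) (h (x (S m)) t)).
    2: apply S_ex. 2: apply h_ex.
    pose proof (h_upper (x (S m)) t Ht). rewrite S_INR.
    change (RInt (S_ x t m) 0 1 + RInt (h (x (S m)) t) 0 1 <= (INR (S m) + 1) * t ^ 2).
    lra.
Qed.

Lemma minf_S x t m y : 0 <= t ->
  t - S_ x t m y <= minf (fun i => Rabs (x i - y)) m.
Proof.
  intros Ht. induction m; simpl.
  - unfold h. rewrite Rabs_minus_sym. pose proof (Rmax_r 0 (t - Rabs (x 0%nat - y))). lra.
  - pose proof (S_ge0 x t m y).
    assert (H1 : t - Rabs (x (S m) - y) <= h (x (S m)) t y).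
    { unfold h. rewrite Rabs_minus_sym. apply Rmax_r. }
    pose proof (h_ge0 (x (S m)) t y).
    apply Rmin_glb; lra.
Qed.
Open Scope R_scope.

Lemma f_ex x m u v : ex_RInt (fun y => minf (fun i => Rabs (x i - y)) m) u v.
Proof. apply (ex_RInt_continuous (V:=R_CompleteNormedModule)). intros; apply minf_cont. Qed.

Lemma lower1 x m t : 0 <= t ->
  t - INR (S m) * t^2 <= RInt (fun y => minf (fun i => Rabs (x i - y)) m) 0 1.
Proof.
  intros Ht.
  assert (Hex : ex_RInt (fun y => minus t (S_ x t m y)) 0 1).
  { apply (ex_RInt_continuous (V:=R_CompleteNormedModule)). intros.
    apply (continuous_minus (fun _ => t) (S_ x t m)). apply continuous_const. apply S_cont. }
  eapply Rle_trans.
  2:{ apply RInt_le. lra. exact Hex. apply f_ex. intros y _. apply minf_S; auto. }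
  rewrite (RInt_minus (V:=R_CompleteNormedModule) (fun _ => t) (S_ x t m)).
  2:{ apply (ex_RInt_continuous (V:=R_CompleteNormedModule)). intros; apply continuous_const. }
  2: apply S_ex.
  rewrite RInt_const. pose proof (S_int x t m Ht).
  change (t - INR (S m) * t^2 <= (1 - 0) * t - RInt (S_ x t m) 0 1). lra.
Qed.

Lemma lower2 x m z : 0 <= x 0%nat <= 1 -> 0 <= z <= 1 ->
  let d := minf (fun i => Rabs (x i - z)) m in
  d^2/2 <= RInt (fun y => minf (fun i => Rabs (x i - y)) m) 0 1.
Proof.
  intros Hx Hz d.
  assert (Hd0 : 0 <= d) by (apply minf_ge0; intros; apply Rabs_pos).
  assert (Hd1 : d <= Rabs (x 0%nat - z)) by apply minf_le0.
  assert (Hle : RInt (h z d) 0 1 <= RInt (fun y => minf (fun i => Rabs (x i - y)) m) 0 1).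
  { apply RInt_le. lra. apply h_ex. apply f_ex. intros y _.
    unfold h. apply Rmax_lub. apply minf_ge0; intros; apply Rabs_pos.
    pose proof (minf_lip x m y z). fold d in H. lra. }
  eapply Rle_trans; [|exact Hle].
  destruct (Rle_dec (x 0%nat) z).
  - rewrite Rabs_left1 in Hd1 by lra.
    rewrite (chasles3 _ 0 (z - d) 1) by apply h_ex.
    rewrite (chasles3 _ (z - d) z 1) by apply h_ex.
    rewrite h_left by auto.
    assert (0 <= RInt (h z d) 0 (z - d)) by (apply RInt_ge_0; [lra|apply h_ex|intros; apply h_ge0]).
    assert (0 <= RInt (h z d) z 1) by (apply RInt_ge_0; [lra|apply h_ex|intros; apply h_ge0]).
    lra.
  - rewrite Rabs_right in Hd1 by lra.
    rewrite (chasles3 _ 0 z 1) by apply h_ex.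
    rewrite (chasles3 _ z (z + d) 1) by apply h_ex.
    rewrite h_right by auto.
    assert (0 <= RInt (h z d) 0 z) by (apply RInt_ge_0; [lra|apply h_ex|intros; apply h_ge0]).
    assert (0 <= RInt (h z d) (z + d) 1) by (apply RInt_ge_0; [lra|apply h_ex|intros; apply h_ge0]).
    lra.
Qed.

Theorem theorem5 :
  exists C : R,
    forall (n : nat) (x : nat -> R),
      (2 <= n)%nat ->
      (forall i, (i < n)%nat -> 0 <= x i <= 1) ->
      forall z : R, 0 <= z <= 1 ->
        min_util n x z <= C * sqrt (INR n) * uniform_value n x.
Proof.
  exists 3. intros n x Hn Hx z Hz.
  unfold uniform_value.
  destruct n as [|m]; [lia|].
  assert (E : RInt (fun y => min_util (S m) x y) 0 1 =
              RInt (fun y => minf (fun i => Rabs (x i - y)) m) 0 1).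
  { apply RInt_ext; intros; unfold min_util. now replace (S m - 1)%nat with m by lia. }
  rewrite E. clear E. unfold min_util. replace (S m - 1)%nat with m by lia.
  pose proof (lower2 x m z (Hx 0%nat ltac:(lia)) Hz) as L2. simpl in L2.
  set (N := INR (S m)) in *.
  assert (HN : 2 <= N) by (unfold N; replace 2 with (INR 2) by (simpl; ring); apply le_INR; lia).
  pose proof (lower1 x m (/(2*N)) ltac:(apply Rlt_le, Rinv_0_lt_compat; lra)) as L1.
  fold N in L1.
  set (I := RInt _ 0 1) in *.
  set (d := minf _ m) in *.
  assert (Hd0 : 0 <= d) by (apply minf_ge0; intros; apply Rabs_pos).
  assert (L1' : 1 <= 4 * N * I).
  { replace (/ (2 * N) - N * (/ (2 * N)) ^ 2) with (/ (4 * N)) in L1 by (field; lra).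
    apply (Rmult_le_compat_l (4 * N)) in L1; [|lra].
    rewrite Rinv_r in L1 by (apply Rgt_not_eq; lra). lra. }
  set (s := sqrt N).
  assert (Hs2 : s * s = N) by (apply sqrt_sqrt; lra).
  assert (Hs : 0 < s) by (apply sqrt_lt_R0; lra).
  assert (HI : 0 <= I) by nra.
  destruct (Rle_dec d (3 * s * I)) as [Hok|Hlt].
  { exact Hok. }
  exfalso. apply Rnot_le_lt in Hlt.
  assert (H3 : 0 <= 3 * s * I) by (apply Rmult_le_pos; lra).
  assert (d * d > (3 * s * I) * (3 * s * I)).
  { apply Rmult_le_0_lt_compat; lra. }
  assert (N * I * I >= d * d / 8).
  { assert (0 <= d * (d * 1) / 2) by (apply Rmult_le_pos; [apply Rmult_le_pos; lra | lra]).
    assert (I * (4 * N * I) >= d * (d * 1) / 2 * 1) by (apply Rmult_ge_compat; lra). lra. }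
  assert (Eq : (3 * s * I) * (3 * s * I) = 9 * (s * s) * (I * I)) by ring.
  rewrite Hs2 in Eq. assert (0 <= d * d) by (apply Rmult_le_pos; lra). lra.
Qed.
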